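(* In the setting described in the context, suppose that the path satisfies $\lim_{\ell\to\infty}(\vec n_\ell)_j=\infty$ for every $j=1,\dots,r$. Then for every $\ell\ge0$, $x q_\ell(x)$ is a finite linear combination of the functions $q_0,q_1,\dots$; more precisely, \[ x\,q_\ell(x)=\sum_{k=0}^{\infty}J_{k,\ell}\,q_k(x), \] where only finitely many terms of the sum are nonzero (so multiplication by $x$ maps $\operatorname{span}\{q_k:k\ge0\}$ into itself, with matrix the transpose of $J$).
   Context: Let $r\ge1$ and let $\mu_1,\dots,\mu_r$ be positive Borel measures on $\mathbb{R}$ with all moments finite, forming a perfect system: for every $\vec n\in\mathbb{N}_0^r$ there is a monic polynomial $P_{\vec n}$ of degree $|\vec n|=n_1+\dots+n_r$ with $\int x^kP_{\vec n}\,d\mu_j=0$ for $0\le k\le n_j-1$, $1\le j\le r$. The type I multiple orthogonal polynomials $A_{\vec n}=(A_{\vec n,1},\dots,A_{\vec n,r})$ are defined by $\deg A_{\vec n,j}\le n_j-1$, $\sum_{j}\int x^kA_{\vec n,j}\,d\mu_j=0$ for $0\le k\le|\vec n|-2$ and $\sum_j\int x^{|\vec n|-1}A_{\vec n,j}\,d\mu_j=1$ (they exist uniquely for perfect systems). Let $\mu$ be a positive measure with $\mu_j\ll\mu$ for all $j$, $w_j=d\mu_j/d\mu$, and $Q_{\vec n}=\sum_{j=1}^rA_{\vec n,j}w_j$. Fix a path $(\vec n_\ell)_{\ell\ge0}$ with $|\vec n_\ell|=\ell$ and $\vec n_{\ell+1}=\vec n_\ell+\vec e_{i_\ell}$ ($\vec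 e_j$ the $j$-th unit vector, $i_\ell\in\{1,\dots,r\}$), and set $p_\ell=P_{\vec n_\ell}$, $q_\ell=Q_{\vec n_{\ell+1}}$; these satisfy $\int p_\ell q_{\ell'}\,d\mu=\delta_{\ell,\ell'}$. The matrix $J=[J_{\ell,k}]_{\ell,k\ge0}$ is defined by $xp_\ell=\sum_{k=0}^{\ell+1}J_{\ell,k}p_k$, with $J_{\ell,k}=0$ for $k>\ell+1$. *)

(* Defs.v *)
From HB Require Import structures.
From mathcomp Require Import all_boot all_order all_algebra.
From mathcomp Require Import all_classical all_reals all_analysis.
Set Implicit Arguments. Unset Strict Implicit. Unset Printing Implicit Defensive.
Import Order.TTheory GRing.Theory Num.Theory.
Local Open Scope ring_scope.

Definition mindex (r : nat) := {ffun 'I_r -> nat}.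

Definition mabs (r : nat) (n : mindex r) : nat := (\sum_(j < r) n j)%N.

Definition madd_unit (r : nat) (n : mindex r) (i : 'I_r) : mindex r :=
  [ffun j => (n j + (j == i))%N].

Section Defs.
Variables (R : realType) (r : nat).

Definition all_moments_finite (mu : {measure set R -> \bar R}) : Prop :=
  forall k : nat, mu.-integrable setT (fun x : R => (x ^+ k)%:E).

Definition typeII_orth (mus : 'I_r -> {measure set R -> \bar R})
    (n : mindex r) (P : {poly R}) : Prop :=
  forall (j : 'I_r) (k : nat), (k < n j)%N ->
    (\int[mus j]_(x in setT) ((x ^+ k * P.[x])%:E) = 0)%E.

Definition typeII (mus : 'I_r -> {measure set R -> \bar R})
    (n : mindex r) (P : {poly R}) : Prop :=
  P \is monic /\ size P = (mabs n).+1 /\ typeII_orth mus n P.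

Definition perfect_system (mus : 'I_r -> {measure set R -> \bar R}) : Prop :=
  forall n : mindex r, exists! P : {poly R}, typeII mus n P.

Definition typeI (mus : 'I_r -> {measure set R -> \bar R})
    (n : mindex r) (A : 'I_r -> {poly R}) : Prop :=
  (forall j : 'I_r, (size (A j) <= n j)%N) /\
  (forall k : nat, (k.+2 <= mabs n)%N ->
     (\sum_(j < r) \int[mus j]_(x in setT) ((x ^+ k * (A j).[x])%:E) = 0)%E) /\
  (\sum_(j < r) \int[mus j]_(x in setT) ((x ^+ (mabs n).-1 * (A j).[x])%:E)
     = 1)%E.

Definition is_density (mu nu : {measure set R -> \bar R}) (w : R -> R) : Prop :=
  measurable_fun setT w /\ (forall x, 0 <= w x) /\
  forall A : set R, measurable A -> nu A = (\int[mu]_(x in A) (w x)%:E)%E.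

Definition typeI_fun (A : 'I_r -> {poly R}) (w : 'I_r -> R -> R) (x : R) : R :=
  \sum_(j < r) (A j).[x] * w j x.

Definition is_path (n : nat -> mindex r) (i : nat -> 'I_r) : Prop :=
  (forall l, mabs (n l) = l) /\ (forall l, n l.+1 = madd_unit (n l) (i l)).
End Defs.

(* Main.v *)
Require Import Defs.
From HB Require Import structures.
From mathcomp Require Import all_boot all_order all_algebra.
From mathcomp Require Import all_classical all_reals all_analysis.
Import Order.TTheory GRing.Theory Num.Theory.
Local Open Scope ring_scope.
Set Implicit Arguments. Unset Strict Implicit.

Definition mom (R : realType) (m : {measure set R -> \bar R}) (i : nat) : R :=
  fine (\int[m]_(x in setT) ((x ^+ i)%:E))%E.

Lemma int_sum (R : realType) (m : {measure set R -> \bar R})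
  (hm : all_moments_finite m) (M : nat) (c : nat -> R) :
  m.-integrable setT (fun x => (\sum_(i < M) c i * x ^+ i)%:E) /\
  (\int[m]_(x in setT) ((\sum_(i < M) c i * x ^+ i)%:E) =
     (\sum_(i < M) c i * mom m i)%:E)%E.
Proof.
elim: M => [|M [IHi IHe]].
  have -> : (fun x : R => (\sum_(i < 0) c i * x ^+ i)%:E) = cst 0%E.
    by apply: funext => x; rewrite big_ord0.
  by split; [exact: integrable0 | rewrite integral0 big_ord0].
have E : (fun x : R => (\sum_(i < M.+1) c i * x ^+ i)%:E) =
   (fun x => (\sum_(i < M) c i * x ^+ i)%:E + (c M)%:E * (x ^+ M)%:E)%E.
  by apply: funext => x; rewrite big_ord_recr /= EFinD EFinM.
have hZ : m.-integrable setT (fun x : R => ((c M)%:E * (x ^+ M)%:E)%E).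
  exact: integrableZl.
rewrite E; split.
  exact: (integrableD measurableT IHi hZ).
rewrite (integralD measurableT IHi hZ) IHe integralZl //.
rewrite big_ord_recr /= EFinD EFinM /mom fineK //.
exact: integrable_fin_num (hm M).
Qed.

Definition Lfun (R : realType) (m : {measure set R -> \bar R}) (p : {poly R}) : R :=
  \sum_(i < size p) p`_i * mom m i.

Lemma int_poly (R : realType) (m : {measure set R -> \bar R})
  (hm : all_moments_finite m) (p : {poly R}) :
  (\int[m]_(x in setT) ((p.[x])%:E) = (Lfun m p)%:E)%E.
Proof.
have -> : (fun x => (p.[x])%:E) = (fun x => (\sum_(i < size p) p`_i * x ^+ i)%:E).
  by apply: funext => x; rewrite horner_coef.
by case: (int_sum hm (size p) (fun i => p`_i)).
Qed.

Lemma Lfun_widen (R : realType) (m : {measure set R -> \bar R}) (p : {poly R}) N :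
  (size p <= N)%N -> Lfun m p = \sum_(i < N) p`_i * mom m i.
Proof.
move=> hN; rewrite /Lfun (big_ord_widen N (fun i => p`_i * mom m i) hN).
rewrite [RHS](bigID (fun i : 'I_N => (i < size p)%N)) /=.
rewrite [X in _ = _ + X]big1 ?addr0 // => i; rewrite -leqNgt => hi.
by rewrite nth_default // mul0r.
Qed.

Lemma LfunL (R : realType) (m : {measure set R -> \bar R}) a (p q : {poly R}) :
  Lfun m (a *: p + q) = a * Lfun m p + Lfun m q.
Proof.
set N := maxn (size p) (size q).
have hp : (size p <= N)%N by rewrite leq_maxl.
have hq : (size q <= N)%N by rewrite leq_maxr.
have hs : (size (a *: p + q)%R <= N)%N.
  by rewrite (leq_trans (size_polyD _ _)) // geq_max (leq_trans (size_scale_leq _ _)).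
rewrite (Lfun_widen _ hs) (Lfun_widen _ hp) (Lfun_widen _ hq) big_distrr -big_split /=.
by apply: eq_bigr => i _; rewrite coefD coefZ mulrDl mulrA.
Qed.

Theorem proposition2 (R : realType) (r : nat) (hr : (0 < r)%N)
  (mus : 'I_r -> {measure set R -> \bar R})
  (hmom : forall j, all_moments_finite (mus j))
  (hperf : perfect_system mus)
  (mu : {measure set R -> \bar R}) (w : 'I_r -> R -> R)
  (hw : forall j, is_density mu (mus j) (w j))
  (P : mindex r -> {poly R}) (hP : forall n, typeII mus n (P n))
  (A : mindex r -> 'I_r -> {poly R})
  (hA : forall n, (0 < mabs n)%N -> typeI mus n (A n))
  (n : nat -> mindex r) (i : nat -> 'I_r) (hpath : is_path n i)
  (hinf : forall (j : 'I_r) (M : nat), exists L, forall l, (L <= l)%N -> (M <= n l j)%N)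
  (J : nat -> nat -> R)
  (hJ : forall l, 'X * P (n l) = \sum_(k < l.+2) J l k *: P (n k))
  (hJ0 : forall l k, (l.+1 < k)%N -> J l k = 0) :
  let q := fun l => typeI_fun (A (n l.+1)) w in
  forall l : nat, exists N : nat,
    (forall k, (N <= k)%N -> J k l = 0) /\
    forall x : R, x * q l x = \sum_(k < N) J k l * q k x.
Proof.
move=> q l.
pose lam j (p : {poly R}) := Lfun (mus j) p.
have lamL j a p p' : lam j (a *: p + p') = a * lam j p + lam j p' by apply: LfunL.
have lam0 j : lam j 0 = 0 by rewrite /lam /Lfun size_poly0 big_ord0.
have lamZ j a p : lam j (a *: p) = a * lam j p.
  by rewrite -[a *: p]addr0 lamL lam0 addr0.
have lamD j p p' : lam j (p + p') = lam j p + lam j p'.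
  by have := lamL j 1 p p'; rewrite scale1r mul1r.
have lamI j (p : {poly R}) :
    (\int[mus j]_(x in setT) (p.[x])%:E)%E = (lam j p)%:E by apply: int_poly.
have hornXk (k : nat) (p : {poly R}) :
    (fun x : R => (x ^+ k * p.[x])%:E) = (fun x => (('X^k * p).[x])%:E).
  by apply: funext => x; rewrite hornerM hornerXn.
have hPo N j k : (k < n N j)%N -> lam j ('X^k * P (n N)) = 0.
  move=> hk; case: (hP (n N)) => _ [_ /(_ j k hk)].
  by rewrite hornXk lamI => -[].
have hAs N j : (size (A (n N.+1) j) <= n N.+1 j)%N.
  have hN : (0 < mabs (n N.+1))%N by rewrite hpath.1.
  by case: (hA _ hN) => /(_ j).
have hA0 N k : (k.+2 <= N.+1)%N -> \sum_(j < r) lam j ('X^k * A (n N.+1) j) = 0.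
  have hN : (0 < mabs (n N.+1))%N by rewrite hpath.1.
  move=> hk; case: (hA _ hN) => _ [/(_ k) + _]; rewrite hpath.1 => /(_ hk).
  under eq_bigr do rewrite hornXk lamI.
  by rewrite sumEFin => -[].
have hA1 N : \sum_(j < r) lam j ('X^N * A (n N.+1) j) = 1.
  have hN : (0 < mabs (n N.+1))%N by rewrite hpath.1.
  case: (hA _ hN) => _ [_]; rewrite hpath.1 /=.
  under eq_bigr do rewrite hornXk lamI.
  by rewrite sumEFin => -[].
have lam_sum j M (F : nat -> {poly R}) :
    lam j (\sum_(m < M) F m) = \sum_(m < M) lam j (F m).
  elim: M => [|M IH]; first by rewrite !big_ord0 lam0.
  by rewrite !big_ord_recr /= lamD IH.
pose pair (p : {poly R}) (B : 'I_r -> {poly R}) := \sum_(j < r) lam j (p * B j).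
have pairL1 a p p' B : pair (a *: p + p') B = a * pair p B + pair p' B.
  rewrite /pair big_distrr -big_split /=; apply: eq_bigr => j _.
  by rewrite mulrDl -scalerAl lamL.
have pair0 B : pair 0 B = 0.
  by rewrite /pair big1 // => j _; rewrite mul0r lam0.
have pairZ1 a p B : pair (a *: p) B = a * pair p B.
  by rewrite -[a *: p]addr0 pairL1 pair0 addr0.
have pairD p p' B : pair (p + p') B = pair p B + pair p' B.
  by have := pairL1 1 p p' B; rewrite scale1r mul1r.
have pair_sum1 M (F : nat -> {poly R}) B :
    pair (\sum_(m < M) F m) B = \sum_(m < M) pair (F m) B.
  elim: M => [|M IH]; first by rewrite !big_ord0 pair0.
  by rewrite !big_ord_recr /= pairD IH.
have pair_sum2 p M (c : nat -> R) (C : nat -> 'I_r -> {poly R}) :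
    pair p (fun j => \sum_(m < M) c m *: C m j) = \sum_(m < M) c m * pair p (C m).
  rewrite /pair; under eq_bigr => j _ do
    rewrite mulr_sumr (lam_sum j M (fun m => p * (c m *: C m j))).
  rewrite exchange_big /=; apply: eq_bigr => m _; rewrite big_distrr.
  by apply: eq_bigr => j _ /=; rewrite -scalerCA -scalerAl lamZ.
have pairB2 p B C : pair p (fun j => B j - C j) = pair p B - pair p C.
  rewrite /pair -sumrB; apply: eq_bigr => j _.
  by rewrite mulrBr -scaleN1r addrC lamL mulN1r addrC.
have pairX p B : pair p (fun j => 'X * B j) = pair ('X * p) B.
  by rewrite /pair; apply: eq_bigr => j _; rewrite mulrCA mulrA.
have poly_exp (p : {poly R}) : p = \sum_(k < size p) p`_k *: 'X^k.
  by rewrite -poly_def coefK.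
have lowdeg (p : {poly R}) B s : (forall k, (k < s)%N -> pair 'X^k B = 0) -> (size p <= s)%N ->
    pair p B = 0.
  move=> hk hs; rewrite (poly_exp p).
  rewrite (pair_sum1 _ (fun k => p`_k *: 'X^k)) big1 // => k _.
  by rewrite pairZ1 hk ?mulr0 // (leq_trans (ltn_ord k)).
have lowdegL j (p p' : {poly R}) s : (forall k, (k < s)%N -> lam j ('X^k * p') = 0) ->
    (size p <= s)%N -> lam j (p * p') = 0.
  move=> hk hs; rewrite (poly_exp p) mulr_suml.
  rewrite (lam_sum _ _ (fun k => p`_k *: 'X^k * p')) big1 // => k _.
  by rewrite -scalerAl lamZ hk ?mulr0 // (leq_trans (ltn_ord k)).
have nS N j : n N.+1 j = (n N j + (j == i N))%N.
  by rewrite hpath.2 /madd_unit ffunE.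
have mono a b j : (a <= b)%N -> (n a j <= n b j)%N.
  elim: b => [|b IH]; first by rewrite leqn0 => /eqP ->.
  rewrite leq_eqVlt => /orP [/eqP -> //|/IH h].
  by rewrite nS (leq_trans h) ?leq_addr.
have n0 j : n 0%N j = 0%N.
  have h : (n 0%N j <= mabs (n 0%N))%N by rewrite /mabs (bigD1 j) //= leq_addr.
  by apply/eqP; rewrite -leqn0; rewrite hpath.1 in h.
have hPs N : size (P (n N)) = N.+1.
  by case: (hP (n N)) => _ [-> _]; rewrite hpath.1.
have hPm N : (P (n N))`_N = 1.
  case: (hP (n N)) => hm [hs _]; move/monicP: hm.
  by rewrite lead_coefE hs hpath.1.
have pairXA k m : (k < m)%N -> pair 'X^k (A (n m.+1)) = 0.
  by move=> hk; apply: hA0.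
have biortho k m : pair (P (n k)) (A (n m.+1)) = (k == m)%:R.
  case: (ltngtP k m) => hkm.
  - by apply: (lowdeg _ _ m) => [k' hk'|]; [exact: pairXA | rewrite hPs].
  - rewrite /pair big1 // => j _; rewrite mulrC.
    apply: (lowdegL _ _ _ (n k j)); first by move=> k' hk'; apply: hPo.
    by rewrite (leq_trans (hAs _ _)) // mono.
  - rewrite hkm (poly_exp (P (n m))) hPs big_ord_recr /= hPm scale1r pairD.
    rewrite (lowdeg _ _ m) ?add0r; first exact: hA1.
      by move=> k' hk'; apply: pairXA.
    by rewrite -poly_def size_poly.
have delta (f : nat -> R) N (k : nat) :
    \sum_(m < N) f m * ((m : nat) == k)%:R = if (k < N)%N then f k else 0.
  elim: N => [|N IH]; first by rewrite big_ord0.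
  rewrite big_ord_recr /= IH.
  case: (ltngtP k N) => hk /=; rewrite ?mulr0 ?addr0 ?mulr1.
  - by rewrite ltnS ltnW.
  - by rewrite ltnS leqNgt hk.
  - by rewrite hk ltnS leqnn ?ltnn ?add0r.
have pair_zero p : pair p (fun _ => 0) = 0.
  by rewrite /pair big1 // => j _; rewrite mulr0 lam0.
have pairZ2 p s' B : pair p (fun j => s' *: B j) = s' * pair p B.
  rewrite /pair big_distrr; apply: eq_bigr => j _ /=.
  by rewrite -scalerCA -scalerAl lamZ.
have sizeDown (p : {poly R}) d : (size p <= d.+1)%N -> p`_d = 0 -> (size p <= d)%N.
  move=> h1 h2; move: h1; rewrite leq_eqVlt => /orP [/eqP hs|] //.
  have : lead_coef p = 0 by rewrite lead_coefE hs.
  by move/eqP; rewrite lead_coef_eq0 => /eqP ->; rewrite size_poly0.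
have ortho0 N : forall B : 'I_r -> {poly R}, (forall j, (size (B j) <= n N j)%N) ->
    (forall k, (k < N)%N -> pair (P (n k)) B = 0) -> forall j, B j = 0.
  elim: N => [|N IH] B hB hO.
    by move=> j; apply/eqP; rewrite -size_poly_leq0 -(n0 j).
  set i0 := i N; set d := n N i0; set Aa := A (n N.+1).
  have hVs (C : 'I_r -> {poly R}) : (forall j, (size (C j) <= n N.+1 j)%N) ->
      (C i0)`_d = 0 -> forall j, (size (C j) <= n N j)%N.
    move=> hC hc j'; have := hC j'; rewrite nS.
    case: eqP => [->|_]; rewrite ?addn0 ?addn1 // => h; exact: sizeDown.
  have hOA k : (k < N)%N -> pair (P (n k)) Aa = 0.
    by move=> hk; rewrite biortho (ltn_eqF hk).
  case: (eqVneq ((Aa i0)`_d) 0) => ha.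
    have h0 := IH Aa (hVs Aa (hAs N) ha) hOA.
    have := biortho N N; rewrite eqxx.
    have -> : A (n N.+1) = (fun _ => 0) by apply: funext => j; exact: h0.
    by rewrite pair_zero => /eqP; rewrite eq_sym oner_eq0.
  set c := (B i0)`_d; set s' := c / (Aa i0)`_d.
  have hD := IH (fun j => B j - s' *: Aa j).
  have hDs : forall j, (size (B j - s' *: Aa j)%R <= n N.+1 j)%N.
    move=> j; rewrite (leq_trans (size_polyD _ _)) // geq_max hB /= size_polyN.
    by rewrite (leq_trans (size_scale_leq _ _)) ?hAs.
  have hDc : (B i0 - s' *: Aa i0)`_d = 0.
    by rewrite coefB coefZ /s' divfK // subrr.
  have hDO k : (k < N)%N -> pair (P (n k)) (fun j => B j - s' *: Aa j) = 0.
    move=> hk; rewrite (pairB2 _ B (fun j => s' *: Aa j)) pairZ2 hO ?hOA ?mulr0 ?subr0 //.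
    exact: ltnW.
  have hD0 := hD (hVs _ hDs hDc) hDO.
  have hBs j : B j = s' *: Aa j by apply/eqP; rewrite -subr_eq0; apply/eqP.
  have : pair (P (n N)) B = 0 by apply: hO.
  have -> : B = (fun j => s' *: Aa j) by apply: funext.
  rewrite pairZ2 biortho eqxx mulr1 => hs0 j.
  by rewrite hs0 scale0r.
have span N (B : 'I_r -> {poly R}) : (forall j, (size (B j) <= n N j)%N) ->
    forall j, B j = \sum_(m < N) pair (P (n m)) B *: A (n m.+1) j.
  move=> hB.
  set cB := fun m => pair (P (n m)) B.
  have hS j : (size (\sum_(m < N) cB m *: A (n m.+1) j)%R <= n N j)%N.
    apply/leq_sizeP => k hk; rewrite coef_sum big1 // => m _.
    rewrite coefZ; apply/eqP; rewrite mulf_eq0; apply/orP; right; apply/eqP.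
    apply: (leq_sizeP _ _ (hAs m j)).
    by rewrite (leq_trans _ hk) // mono.
  have := ortho0 N (fun j => B j - \sum_(m < N) cB m *: A (n m.+1) j).
  move=> h j; apply/eqP; rewrite -subr_eq0; apply/eqP; apply: h => [j'|k hk].
    by rewrite (leq_trans (size_polyD _ _)) // geq_max hB /= size_polyN hS.
  rewrite (pairB2 _ B (fun j => \sum_(m < N) cB m *: A (n m.+1) j)).
  rewrite (pair_sum2 _ N cB (fun m => A (n m.+1))).
  under eq_bigr do rewrite biortho eq_sym.
  by rewrite delta hk subrr.
have [Lf hLf] := choice (fun j => hinf j (n l.+1 j).+1).
set N := maxn l.+2 (\max_(j < r) Lf j).
have hV j : (size ('X * A (n l.+1) j)%R <= n N j)%N.
  apply: (@leq_trans (size (A (n l.+1) j)).+1).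
    case: (eqVneq (A (n l.+1) j) 0) => [->|hz]; first by rewrite mulr0 size_poly0.
    by rewrite mulrC size_mulX.
  apply: (leq_trans _ (hLf j N _)); first by rewrite ltnS hAs.
  by rewrite (leq_trans (@leq_bigmax _ (fun j => Lf j) j)) // leq_maxr.
have hXJ m : pair (P (n m)) (fun j => 'X * A (n l.+1) j) = J m l.
  rewrite pairX hJ (pair_sum1 _ (fun k => J m k *: P (n k))).
  under eq_bigr do rewrite pairZ1 biortho.
  rewrite delta; case: ifP => // hl.
  by rewrite hJ0 // ltnNge -ltnS hl.
have hsp := span N _ hV.
exists N; split.
  move=> k hk; rewrite -(hXJ k).
  have -> : (fun j => 'X * A (n l.+1) j) =
      (fun j => \sum_(m < N) J m l *: A (n m.+1) j).
    by apply: funext => j; rewrite hsp; apply: eq_bigr => m _; rewrite hXJ.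
  rewrite (pair_sum2 _ N (fun m => J m l) (fun m => A (n m.+1))).
  under eq_bigr do rewrite biortho eq_sym.
  by rewrite (delta (fun m => J m l)) ltnNge hk.
move=> x; rewrite /q /typeI_fun mulr_sumr.
have E j : x * ((A (n l.+1) j).[x] * w j x) =
    \sum_(m < N) J m l * ((A (n m.+1) j).[x] * w j x).
  rewrite mulrA -[x * _]mulrC -hornerMX [_ * 'X]mulrC hsp.
  rewrite (eq_bigr (fun m : 'I_N => J m l *: A (n m.+1) j)); last first.
    by move=> m _; rewrite hXJ.
  by rewrite horner_sum mulr_suml; apply: eq_bigr => m _; rewrite hornerZ mulrA.
under eq_bigr do rewrite E.
rewrite exchange_big /=; apply: eq_bigr => m _.
by rewrite mulr_sumr.
Qed.
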